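(* Let $0\le q<\tfrac12$ and $p=1-q$. Let $X_1,X_2,\dots$ be i.i.d. letters in $\{S,H\}$ with $\mathbb{P}[X_i=S]=q$ and $\mathbb{P}[X_i=H]=p$. Define the selfish-mining attack cycle and the random variable $L$ as follows: (i) if $X_1=H$, the cycle is $H$ and $L=1$; (ii) if $X_1X_2=SH$, the cycle is $X_1X_2X_3$ (with $X_3\in\{S,H\}$ arbitrary) and $L=2$; (iii) if $X_1X_2=SS$, the cycle is $X_1\cdots X_m$, where $m\ge 3$ is the first index with $X_m=H$ and (number of $S$ among $X_1,\dots,X_m$) $-$ (number of $H$ among $X_1,\dots,X_m$) $=1$; in this case $L$ is the number of letters $S$ in the cycle. Then $\mathbb{P}[L=1]=p$, $\mathbb{P}[L=2]=pq+pq^2$, and for every $n\ge 3$, $$\mathbb{P}[L=n]=pq^2(pq)^{n-2}C_{n-2},$$ where $C_k=\frac{(2k)!}{k!\,(k+1)!}$ is the $k$-th Catalan number.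
   Context: This models the Selfish Mining strategy in Bitcoin: each newly validated block is found by the selfish miner (letter $S$, relative hashrate $q$) or by the honest miners (letter $H$, relative hashrate $p$), independently. $L$ is the number of blocks added to the official blockchain during one attack cycle. For example, the cycle $SSSHSHH$ has $L=4$, and the cycle $SSH$ has $L=2$. *)

(* Defs.v *)
From Stdlib Require Import Reals Lra Lia List Arith.
Open Scope R_scope.

(* Letters: true = S (selfish miner, prob q), false = H (honest, prob p = 1-q). *)

(* Case (iii): scanning X_3, X_4, ... with nS = #S and nH = #H read so far.
   Stops at the first H after which #S - #H = 1, returning L = #S. *)
Fixpoint scan_iii (nS nH : nat) (w : list bool) : option nat :=
  match w with
  | nil => None
  | true :: r => scan_iii (Datatypes.S nS) nH r
  | false :: r => if Nat.eqb nS (Datatypes.S nH + 1) then Some nS else scan_iii nS (Datatypes.S nH) r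
  end.

(* [L_of_prefix w] = Some n  iff the finite prefix w of X_1 X_2 ... already
   contains a complete attack cycle, whose value of L is n; None otherwise. *)
Definition L_of_prefix (w : list bool) : option nat :=
  match w with
  | false :: _ => Some 1%nat
  | true :: false :: _ :: _ => Some 2%nat        (* (ii)  cycle S H X_3 *)
  | true :: true :: r => scan_iii 2 0 r
  | _ => None
  end.

Fixpoint all_words (N : nat) : list (list bool) :=
  match N with
  | O => nil :: nil
  | Datatypes.S N' => map (cons true) (all_words N') ++ map (cons false) (all_words N')
  end.

Definition word_prob (q : R) (w : list bool) : R :=
  fold_right (fun (x : bool) (acc : R) => (if x then q else 1 - q) * acc) 1 w.

(* P[ the cycle is completed within the first N letters and L = n ]. *)
Definition prob_L_within (q : R) (n N : nat) : R :=
  fold_right Rplus 0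
    (map (word_prob q)
       (filter (fun w => match L_of_prefix w with
                         | Some m => Nat.eqb m n
                         | None => false end) (all_words N))).

(* P[L = n] is the limit as N -> oo of the above increasing sequence
   (continuity of the product measure from below on the union of cylinders).
   [prob_L_is q n v] means P[L = n] = v. *)
Definition prob_L_is (q : R) (n : nat) (v : R) : Prop :=
  Un_cv (prob_L_within q n) v.

Definition catalan (k : nat) : R :=
  INR (fact (2 * k)) / (INR (fact k) * INR (fact (k + 1))).

(* Main.v *)
Require Import Defs.
From Stdlib Require Import Reals Lra Lia List Arith.
Open Scope R_scope.

Definition sumL (f : list bool -> R) (l : list (list bool)) : R :=
  fold_right Rplus 0 (map f l).

Lemma sumL_app f l1 l2 : sumL f (l1 ++ l2) = sumL f l1 + sumL f l2.
Proof. unfold sumL; induction l1; simpl; [ring| rewrite IHl1; ring]. Qed.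

Lemma sumL_map f g l : sumL f (map g l) = sumL (fun w => f (g w)) l.
Proof. unfold sumL; rewrite map_map; reflexivity. Qed.

Lemma sumL_ext f g l : (forall w, f w = g w) -> sumL f l = sumL g l.
Proof. intro H; unfold sumL; induction l; simpl; [ring| rewrite IHl, H; ring]. Qed.

Lemma sumL_scal c f l : sumL (fun w => c * f w) l = c * sumL f l.
Proof. unfold sumL; induction l; simpl; [ring| rewrite IHl; ring]. Qed.

Lemma sumL_zero l : sumL (fun _ => 0) l = 0.
Proof. unfold sumL; induction l; simpl; [ring| rewrite IHl; ring]. Qed.

Lemma sumL_S f N : sumL f (all_words (S N)) =
  sumL (fun w => f (true :: w)) (all_words N) + sumL (fun w => f (false :: w)) (all_words N).
Proof. simpl all_words. rewrite sumL_app, !sumL_map. reflexivity. Qed.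

Lemma sum_prob q N : sumL (word_prob q) (all_words N) = 1.
Proof.
  induction N; [unfold sumL; simpl; ring|].
  rewrite sumL_S. simpl word_prob.
  rewrite (sumL_scal q (word_prob q)), (sumL_scal (1-q) (word_prob q)), IHN. ring.
Qed.

Lemma filter_sum g t l : fold_right Rplus 0 (map g (filter t l)) =
  sumL (fun w => if t w then g w else 0) l.
Proof. unfold sumL; induction l; simpl; [reflexivity|]. destruct (t a); simpl; rewrite IHl; ring. Qed.

Definition oeq (n : nat) (o : option nat) : bool :=
  match o with Some m => Nat.eqb m n | None => false end.

Lemma scan_ge nS nH w m : scan_iii nS nH w = Some m -> (nS <= m)%nat.
Proof.
  revert nS nH; induction w as [|a w IH]; intros nS nH H; simpl in H; [discriminate|].
  destruct a.
  - apply IH in H; lia.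
  - destruct (Nat.eqb nS _); [inversion H; subst; apply le_n| apply (IH _ _ H)].
Qed.

Definition T q nS nH n N :=
  sumL (fun w => if oeq n (scan_iii nS nH w) then word_prob q w else 0) (all_words N).

Lemma T_zero q nS nH n N : (n < nS)%nat -> T q nS nH n N = 0.
Proof.
  intro Hn. unfold T. rewrite <- (sumL_zero (all_words N)) at 1. apply sumL_ext. intro w.
  destruct (scan_iii nS nH w) eqn:E; simpl; [|reflexivity].
  apply scan_ge in E. destruct (Nat.eqb_spec n0 n); [lia|reflexivity].
Qed.

Fixpoint bn (n k : nat) : nat := match n, k with
  | _, O => 1%nat | O, S _ => 0%nat | S n', S k' => (bn n' k' + bn n' k)%nat end.

Lemma bn_0 n : bn n 0 = 1%nat.
Proof. destruct n; reflexivity. Qed.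

Lemma bn_big n k : (n < k)%nat -> bn n k = 0%nat.
Proof.
  revert k; induction n; intros k Hk; destruct k; simpl; try lia; try reflexivity.
  rewrite !IHn; lia.
Qed.

Lemma bn_C n k : (k <= n)%nat -> INR (bn n k) = C n k.
Proof.
  revert k; induction n; intros k Hk.
  - destruct k; [|lia]. unfold C; simpl. field.
  - destruct k.
    + unfold C. simpl bn. rewrite Nat.sub_0_r. simpl (fact 0). simpl (INR 1). field. apply INR_fact_neq_0.
    + simpl bn. rewrite plus_INR. destruct (Nat.eq_dec k n).
      * subst. rewrite (bn_big n (S n)) by lia. rewrite IHn by lia. unfold C. rewrite !Nat.sub_diag.
        simpl (INR 0). simpl (fact 0). simpl (INR 1). field. split; apply INR_fact_neq_0.
      * rewrite !IHn by lia. apply pascal. lia.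
Qed.

Definition K (e j : nat) : R :=
  INR (bn (2*j+e-1) j) - match j with O => 0 | S j' => INR (bn (2*j+e-1) j') end.

Lemma K_0 e : K e 0 = 1.
Proof. unfold K. destruct (2*0+e-1)%nat; simpl; ring. Qed.

Lemma K_rec e j : (2 <= e)%nat -> K e (S j) = K (e+1) j + K (e-1) (S j).
Proof.
  intro He. unfold K.
  replace (2 * S j + e - 1)%nat with (S (2*j+e)) by lia.
  replace (2 * j + (e+1) - 1)%nat with (2*j+e)%nat by lia.
  replace (2 * S j + (e-1) - 1)%nat with (2*j+e)%nat by lia.
  destruct j.
  - change (bn (S (2*0+e)) 1) with (bn (2*0+e) 0 + bn (2*0+e) 1)%nat. rewrite plus_INR. rewrite !bn_0. ring.
  - change (bn (S (2 * S j + e)) (S (S j))) with (bn (2 * S j + e) (S j) + bn (2 * S j + e) (S (S j)))%nat.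
    change (bn (S (2 * S j + e)) (S j)) with (bn (2 * S j + e) j + bn (2 * S j + e) (S j))%nat.
    rewrite !plus_INR. ring.
Qed.

Lemma bn_sym k : bn (2*k+1) (S k) = bn (2*k+1) k.
Proof.
  apply INR_eq. rewrite !bn_C by lia. unfold C.
  replace (2*k+1 - S k)%nat with k by lia. replace (2*k+1 - k)%nat with (S k) by lia.
  rewrite Rmult_comm. reflexivity.
Qed.

Lemma K_rec1 j : K 1 (S j) = K 2 j.
Proof.
  unfold K.
  replace (2 * S j + 1 - 1)%nat with (S (2*j+1)) by lia.
  replace (2 * j + 2 - 1)%nat with (2*j+1)%nat by lia.
  change (bn (S (2*j+1)) (S j)) with (bn (2*j+1) j + bn (2*j+1) (S j))%nat.
  rewrite bn_sym.
  destruct j.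
  - simpl. ring.
  - change (bn (S (2 * S j + 1)) (S j)) with (bn (2 * S j + 1) j + bn (2 * S j + 1) (S j))%nat.
    rewrite !plus_INR. ring.
Qed.

Lemma K_cat k : K 1 k = catalan k.
Proof.
  unfold K, catalan. replace (2*k+1-1)%nat with (2*k)%nat by lia.
  destruct k.
  - simpl. field.
  - rewrite !bn_C by lia. unfold C.
    replace (2 * S k - S k)%nat with (S k) by lia.
    replace (2 * S k - k)%nat with (S (S k)) by lia.
    replace (S k + 1)%nat with (S (S k)) by lia.
    rewrite (fact_simpl (S k)), (fact_simpl k), !mult_INR.
    pose proof (INR_fact_neq_0 k). pose proof (INR_fact_neq_0 (2 * S k)).
    rewrite !S_INR. field.
    pose proof (pos_INR k).
    split; [exact H|split; lra].
Qed.

Lemma ifmul (b : bool) c x : (if b then c * x else 0) = c * (if b then x else 0).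
Proof. destruct b; ring. Qed.

Lemma sumL_ifmul (t : list bool -> bool) c g l :
  sumL (fun w => if t w then c * g w else 0) l = c * sumL (fun w => if t w then g w else 0) l.
Proof. rewrite <- sumL_scal. apply sumL_ext. intro; apply ifmul. Qed.

Lemma sumL_if_const (b : bool) f l : sumL (fun w => if b then f w else 0) l = if b then sumL f l else 0.
Proof. destruct b; [reflexivity|apply sumL_zero]. Qed.

Lemma T_main q : forall N nS nH e j, nS = (nH + 1 + e)%nat -> (1 <= e)%nat ->
  (2*j + e <= N)%nat -> T q nS nH (nS + j) N = K e j * q ^ j * (1-q) ^ (j + e).
Proof.
  induction N; intros nS nH e j HS He HN; [lia|].
  unfold T. rewrite sumL_S. simpl scan_iii. simpl word_prob.
  rewrite !sumL_ifmul.
  destruct (Nat.eqb_spec nS (S (nH + 1))) as [E|E].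
  -
    assert (e = 1%nat) by lia. subst e.
    destruct j.
    + rewrite Nat.add_0_r. simpl oeq. rewrite Nat.eqb_refl. rewrite sum_prob.
      fold (T q (S nS) nH nS N). rewrite T_zero by lia. rewrite K_0. simpl. ring.
    + simpl oeq. replace (Nat.eqb nS (nS + S j)) with false by (symmetry; apply Nat.eqb_neq; lia).
      rewrite sumL_zero.
      fold (T q (S nS) nH (nS + S j) N). replace (nS + S j)%nat with (S nS + j)%nat by lia.
      rewrite (IHN (S nS) nH 2%nat j) by lia. rewrite K_rec1.
      replace (S j + 1)%nat with (j+2)%nat by lia. simpl. ring.
  - fold (T q (S nS) nH (nS + j) N). fold (T q nS (S nH) (nS + j) N).
    rewrite (IHN nS (S nH) (e-1)%nat j) by lia.
    destruct j.
    + rewrite T_zero by lia. rewrite !K_0.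
      replace (0 + e)%nat with (S (0 + (e-1))) by lia. simpl. ring.
    + replace (nS + S j)%nat with (S nS + j)%nat by lia.
      rewrite (IHN (S nS) nH (e+1)%nat j) by lia.
      rewrite (K_rec e j) by lia.
      replace (j + (e+1))%nat with (S (S j + (e-1)))%nat by lia.
      replace (S j + e)%nat with (S (S j + (e-1)))%nat by lia.
      simpl. ring.
Qed.

Lemma cv_const (u : nat -> R) v N0 : (forall N, (N0 <= N)%nat -> u N = v) -> Un_cv u v.
Proof.
  intros H eps Heps. exists N0. intros n Hn. rewrite H by exact Hn.
  unfold R_dist. rewrite Rminus_diag, Rabs_R0. exact Heps.
Qed.

Definition test n w := oeq n (L_of_prefix w).

Lemma within_eq q n N : prob_L_within q n N = sumL (fun w => if test n w then word_prob q w else 0) (all_words N).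
Proof. unfold prob_L_within. apply filter_sum. Qed.

Lemma within_decomp q n N : prob_L_within q n (S (S N)) =
  q * q * T q 2 0 n N
  + q * (1-q) * sumL (fun w => if oeq n (match w with nil => None | _ :: _ => Some 2%nat end) then word_prob q w else 0) (all_words N)
  + (1-q) * (if Nat.eqb 1 n then 1 else 0).
Proof.
  rewrite within_eq, !sumL_S. unfold test. simpl L_of_prefix. simpl word_prob.
  rewrite (sumL_ext (fun w => if oeq n (scan_iii 2 0 w) then q * (q * word_prob q w) else 0)
     (fun w => (q * q) * (if oeq n (scan_iii 2 0 w) then word_prob q w else 0)))
     by (intro w; destruct (oeq n _); ring).
  rewrite sumL_scal. fold (T q 2 0 n N).
  rewrite (sumL_ext (fun w => if oeq n (match w with nil => None | _ :: _ => Some 2%nat end) then q * ((1 - q) * word_prob q w) else 0)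
     (fun w => (q * (1-q)) * (if oeq n (match w with nil => None | _ :: _ => Some 2%nat end) then word_prob q w else 0)))
     by (intro w; destruct (oeq n _); ring).
  rewrite sumL_scal.
  change (oeq n (Some 1%nat)) with (Nat.eqb 1 n).
  rewrite !sumL_if_const.
  destruct (Nat.eqb 1 n).
  - rewrite (sumL_scal (1-q) (fun w => q * word_prob q w)), (sumL_scal (1-q) (fun w => (1-q) * word_prob q w)).
    rewrite !sumL_scal, sum_prob. ring.
  - ring.
Qed.

Theorem mainTheorem1 (q : R) (hq : 0 <= q < 1 / 2) :
  let p := 1 - q in
  prob_L_is q 1 p /\
  prob_L_is q 2 (p * q + p * q ^ 2) /\
  (forall n : nat, (3 <= n)%nat ->
     prob_L_is q n (p * q ^ 2 * (p * q) ^ (n - 2) * catalan (n - 2))).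
Proof.
  intro p. unfold prob_L_is. split; [|split].
  - apply (cv_const _ _ 2%nat). intros N HN.
    destruct N as [|[|N]]; try lia. rewrite within_decomp.
    rewrite T_zero by lia. simpl oeq.
    rewrite (sumL_ext _ (fun _ => 0)) by (intro w; destruct w; reflexivity).
    rewrite sumL_zero. simpl. unfold p. ring.
  - apply (cv_const _ _ 3%nat). intros N HN.
    destruct N as [|[|N]]; try lia. rewrite within_decomp.
    assert (HT: T q 2 0 2 N = K 1 0 * q^0 * (1-q)^(0+1)) by (apply (T_main q N 2 0 1 0); lia).
    rewrite HT.
    destruct N; [lia|].
    rewrite sumL_S.
    rewrite (sumL_ext (fun w => if oeq 2 (Some 2%nat) then word_prob q (true :: w) else 0)
      (fun w => q * word_prob q w)) by (intro; reflexivity).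
    rewrite (sumL_ext (fun w => if oeq 2 (Some 2%nat) then word_prob q (false :: w) else 0)
      (fun w => (1-q) * word_prob q w)) by (intro; reflexivity).
    rewrite !sumL_scal, sum_prob, K_0. simpl. unfold p. ring.
  - intros n Hn. apply (cv_const _ _ (2*n)%nat). intros N HN.
    destruct N as [|[|N]]; try lia. rewrite within_decomp.
    assert (HT: T q 2 0 n N = K 1 (n-2) * q^(n-2) * (1-q)^(n-2+1)).
    { replace n with (2 + (n-2))%nat at 1 by lia. apply (T_main q N 2 0 1 (n-2)); lia. }
    rewrite HT.
    rewrite (sumL_ext _ (fun _ => 0)).
    2:{ intro w; destruct w; [reflexivity|].
        change (oeq n (Some 2%nat)) with (Nat.eqb 2 n).
        replace (Nat.eqb 2 n) with false by (symmetry; apply Nat.eqb_neq; lia). reflexivity. }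
    replace (Nat.eqb 1 n) with false by (symmetry; apply Nat.eqb_neq; lia).
    rewrite sumL_zero, K_cat. unfold p.
    replace (n - 2 + 1)%nat with (S (n-2)) by lia.
    rewrite Rpow_mult_distr. simpl. ring.
Qed.
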